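(* Let $C\in M_n(\mathbb{C})$ be a contraction and $d=\operatorname{rank}(I-C^*C)$. Then every level of the partial isometry tower of $C$ has the Circularity property if and only if $T_1,T_2,\dots,T_{d+1}$ have the Circularity property. Moreover, it is also equivalent that $T_0,T_1,\dots,T_d$ have the Circularity property.
   Context: For $X\in M_n(\mathbb{C})$, $H_X(\theta):=\frac12(e^{-i\theta}X+e^{i\theta}X^* )$; $X$ has the Circularity property if the spectrum of $H_X(\theta)$ is independent of $\theta\in\mathbb{R}$. A contraction is a matrix with $\|C\|\le1$. For a contraction $C$: $D_C=I-C^*C$, $d=\operatorname{rank}D_C$, $B_C$ is a $d\times n$ matrix of full row rank with $B_C^*B_C=D_C$ (matrix of $D_C^{1/2}$ on $\operatorname{Im}D_C$, zero on its complement), $\mathcal{A}(C)=\begin{bmatrix}0&B_C\\0&C\end{bmatrix}$, and the partial isometry tower is $T_0=C$, $T_{j+1}=\mathcal{A}(T_j)$. *)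

(* Defs.v *)
From HB Require Import structures.
From mathcomp Require Import all_boot all_order all_algebra.
From mathcomp Require Import complex.
From mathcomp Require Import reals trigo.
Set Implicit Arguments. Unset Strict Implicit. Unset Printing Implicit Defensive.
Import Order.TTheory GRing.Theory Num.Theory.
Local Open Scope ring_scope.
Local Open Scope complex_scope.

Section Defs.
Variable R : realType.
Local Notation C := R[i].

Definition adjmx m n (X : 'M[C]_(m, n)) : 'M[C]_(n, m) := (map_mx conjc X)^T.

Definition expi (theta : R) : C := (cos theta) +i* (sin theta).

Definition Hmx n (X : 'M[C]_n) (theta : R) : 'M[C]_n :=
  (2%:R)^-1 *: (expi (- theta) *: X + expi theta *: adjmx X).

Definition spectrum n (X : 'M[C]_n) : C -> Prop := fun a => eigenvalue X a.

Definition circularity n (X : 'M[C]_n) : Prop :=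
  forall theta1 theta2 : R, spectrum (Hmx X theta1) = spectrum (Hmx X theta2).

Definition vnorm n (v : 'cV[C]_n) : R := Num.sqrt (\sum_i (ComplexField.Normc.normc (v i 0)) ^+ 2).

Definition contraction n (X : 'M[C]_n) : Prop :=
  forall v : 'cV[C]_n, vnorm (X *m v) <= vnorm v.

Definition defect n (X : 'M[C]_n) : 'M[C]_n := 1%:M - adjmx X *m X.

Record sqmx := SqMx { sdim : nat; smat : 'M[C]_sdim }.

Definition isB n (X : 'M[C]_n) d (B : 'M[C]_(d, n)) : Prop :=
  d = \rank (defect X) /\ row_free B /\ adjmx B *m B = defect X.

Definition A_step (X Y : sqmx) : Prop :=
  exists d (B : 'M[C]_(d, sdim X)), isB (smat X) B /\
    Y = @SqMx (d + sdim X) (block_mx 0 B 0 (smat X)).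

Definition pi_tower n (X : 'M[C]_n) (T : nat -> sqmx) : Prop :=
  T 0%N = @SqMx n X /\ forall j, A_step (T j) (T j.+1).

Definition circ (Y : sqmx) : Prop := circularity (smat Y).

End Defs.

(* Main.v *)
Require Import Defs.
From Stdlib Require FunctionalExtensionality.
From HB Require Import structures.
From mathcomp Require Import all_boot all_order all_algebra all_field.
From mathcomp Require Import complex.
From mathcomp Require Import reals trigo.
From mathcomp Require Import ring zify perm.
Set Implicit Arguments. Unset Strict Implicit. Unset Printing Implicit Defensive.
Import Order.TTheory GRing.Theory Num.Theory.
Local Open Scope ring_scope.
Local Open Scope complex_scope.
Section P1.
Variable K : comNzRingType.
Lemma L0 (p q : nat) (al c c' : K) (B : 'M[K]_(p,q)) (B' : 'M_(q,p)) (N : 'M_q) :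
 al ^+ q * \det (block_mx (al%:M) (c *: B) (c' *: B') N) =
 al ^+ p * \det (al *: N - (c * c') *: (B' *m B)).
Proof.
have E : block_mx 1%:M 0 (- c' *: B') (al%:M) *m block_mx (al%:M) (c *: B) (c' *: B') N
   = block_mx (al%:M) (c *: B) 0 (al *: N - (c*c') *: (B' *m B)).
  rewrite mulmx_block !mul0mx !addr0 !mul1mx; congr block_mx.
  all: rewrite ?mul_mx_scalar ?mul_scalar_mx.
    by rewrite -scalerDr scaleNr addNr scaler0.
  by rewrite -scalemxAl -scalemxAr scalerA mulNr scaleNr addrC [c * _]mulrC.
have := congr1 determinant E.
rewrite det_mulmx det_lblock det1 mul1r det_scalar det_ublock det_scalar => ->.
by rewrite mulrC.
Qed.
End P1.
Section P2.
Variable R : realType.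
Local Notation K := R[i].

Lemma adjmxE m n (X : 'M[K]_(m,n)) i j : adjmx X i j = conjc (X j i).
Proof. by rewrite /adjmx !mxE. Qed.

Lemma adjmx_block m1 m2 n1 n2 (A : 'M[K]_(m1,n1)) (B : 'M_(m1,n2)) (C : 'M_(m2,n1)) (D : 'M_(m2,n2)) :
  adjmx (block_mx A B C D) = block_mx (adjmx A) (adjmx C) (adjmx B) (adjmx D).
Proof. by rewrite /adjmx map_block_mx tr_block_mx. Qed.

Lemma adjmx0 m n : adjmx (0 : 'M[K]_(m,n)) = 0.
Proof. by apply/matrixP => i j; rewrite /adjmx !mxE conjc0. Qed.

Lemma adjmxD m n (A B : 'M[K]_(m,n)) : adjmx (A + B) = adjmx A + adjmx B.
Proof. by apply/matrixP => i j; rewrite /adjmx !mxE rmorphD. Qed.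

Lemma adjmxZ m n a (A : 'M[K]_(m,n)) : adjmx (a *: A) = conjc a *: adjmx A.
Proof. by apply/matrixP => i j; rewrite /adjmx !mxE rmorphM. Qed.

Lemma adjmxK m n (A : 'M[K]_(m,n)) : adjmx (adjmx A) = A.
Proof. by apply/matrixP => i j; rewrite /adjmx !mxE conjcK. Qed.

Definition Hm m (Y : 'M[K]_m) (e : K) : 'M_m :=
  (2%:R)^-1 *: (conjc e *: Y + e *: adjmx Y).

Definition Kf m (Y : 'M[K]_m) (e t a b : K) : K :=
  \det (a *: (t%:M - Hm Y e) - b *: defect Y).

Lemma Hm_block p m (B : 'M[K]_(p,m)) (Y : 'M_m) e :
  Hm (block_mx 0 B 0 Y) e =
  block_mx 0 ((2%:R^-1 * conjc e) *: B) ((2%:R^-1 * e) *: adjmx B) (Hm Y e).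
Proof.
rewrite /Hm adjmx_block !adjmx0 !scale_block_mx add_block_mx !scale_block_mx.
by rewrite !scaler0 !addr0 !add0r !scalerA scaler0.
Qed.

Lemma defect_block p m (B : 'M[K]_(p,m)) (Y : 'M_m) :
  adjmx B *m B = defect Y ->
  defect (block_mx 0 B 0 Y) = block_mx 1%:M 0 0 0.
Proof.
move=> hB; rewrite /defect adjmx_block !adjmx0 mulmx_block.
rewrite !mul0mx !mulmx0 !addr0 ?add0r (scalar_mx_block p m) opp_block_mx add_block_mx.
rewrite !subr0; congr block_mx.
by rewrite hB /defect subrK subrr.
Qed.

End P2.
Section P3.
Variable R : realType.
Local Notation K := R[i].

Lemma Kf_step p m (B : 'M[K]_(p,m)) (Y : 'M_m) e t a b :
  adjmx B *m B = defect Y -> e * conjc e = 1 ->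
  (a*t - b)^+m * Kf (block_mx 0 B 0 Y) e t a b =
  (a*t - b)^+p * (a^+m * Kf Y e t (a*t - b) (a / 4%:R)).
Proof.
move=> hB he; rewrite /Kf Hm_block defect_block //.
set c := - (a * (2%:R^-1 * conjc e)); set c' := - (a * (2%:R^-1 * e)).
have -> : a *: (t%:M - block_mx 0 ((2%:R^-1 * conjc e) *: B) ((2%:R^-1 * e) *: adjmx B) (Hm Y e))
   - b *: block_mx 1%:M 0 0 0 =
   block_mx ((a*t - b)%:M) (c *: B) (c' *: adjmx B) (a *: (t%:M - Hm Y e)).
  rewrite (scalar_mx_block p m) opp_block_mx add_block_mx !scale_block_mx opp_block_mx add_block_mx.
  rewrite !scaler0 !oppr0 !addr0 !add0r /c /c' !scalerN !scalerA !scaleNr.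
  by rewrite scale_scalar_mx scalemx1 -raddfB.
rewrite L0 hB.
have hc : c * c' = a * (a / 4%:R).
  have -> : c * c' = a * (a / 4%:R) * (e * conjc e).
    by rewrite /c /c'; field.
  by rewrite -[RHS]mulr1 -he.
rewrite hc -detZ; congr (_ * \det _).
by rewrite [RHS]scalerBr !scalerA [a * (a * t - b)]mulrC.
Qed.
End P3.
Section P4.
Variable R : realType.
Local Notation K := R[i].

Definition phi (t : K) (ab : K * K) : K * K := (ab.1 * t - ab.2, ab.1 / 4%:R).

Lemma Kf_tower (T : nat -> sqmx R) (hT : forall j, A_step (T j) (T j.+1)) (t : K) :
  forall k (ps : K * K), (forall j, (j <= k)%N -> (iter j (phi t) ps).1 != 0) ->
  exists F G : K, F != 0 /\ G != 0 /\ forall e, e * conjc e = 1 ->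
    F * Kf (smat (T k)) e t ps.1 ps.2 =
    G * Kf (smat (T 0%N)) e t (iter k (phi t) ps).1 (iter k (phi t) ps).2.
Proof.
elim=> [|k IH] ps hps.
  by exists 1, 1; split; [exact: oner_neq0|split; [exact: oner_neq0|]] => e _.
have [F' [G' [hF' [hG' hE]]]] := IH (phi t ps) (fun j hj => etrans (congr1 (fun x => x.1 != 0) (esym (iterSr j (phi t) ps))) (hps j.+1 hj)).
have ha : ps.1 != 0 by exact: (hps 0%N).
have hal : (phi t ps).1 != 0 by exact: (hps 1%N).
have [p [B [[_ [_ hB]] ->]]] := hT k.
exists (F' * ((phi t ps).1) ^+ (sdim (T k))), ((phi t ps).1 ^+ p * ps.1 ^+ (sdim (T k)) * G').
split; first by rewrite mulf_neq0 // expf_neq0.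
split; first by rewrite !mulf_neq0 // expf_neq0.
move=> e he.
have h : (phi t ps).1 ^+ sdim (T k) * Kf (smat (SqMx (block_mx 0 B 0 (smat (T k))))) e t ps.1 ps.2 =
   (phi t ps).1 ^+ p * (ps.1 ^+ sdim (T k) * Kf (smat (T k)) e t (phi t ps).1 (phi t ps).2).
  exact: (Kf_step t ps.1 ps.2 hB he).
rewrite -mulrA h.
have h2 := hE e he; rewrite -iterSr in h2.
rewrite mulrCA [F' * _]mulrCA h2.
by rewrite -!mulrA; congr (_ * _); rewrite mulrCA.
Qed.
End P4.
Section P5.
Variable K : idomainType.

Lemma size_det_block (p q : nat) (M : 'M[{poly K}]_(p + q)) :
  (forall i j, (size (M (lshift q i) j) <= 2)%N) ->
  (forall i j, (size (M (rshift p i) j) <= 1)%N) ->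
  (size (\det M) <= p.+1)%N.
Proof.
move=> hu hd; rewrite /determinant.
apply: (leq_trans (size_sum _ _ _)); apply/bigmax_leqP => s _.
rewrite mulr_sign; have h : (size (\prod_i M i (s i))%R <= p.+1)%N.
  rewrite big_split_ord /=.
  apply: (leq_trans (size_mul_leq _ _)).
  have h1 : (size (\prod_(i < p) M (lshift q i) (s (lshift q i)))%R <= p.+1)%N.
    apply: (leq_trans (size_poly_prod_leq _ _)).
    rewrite card_ord leq_subLR; apply: (@leq_trans (\sum_(i < p) 2).+1).
      by rewrite ltnS; apply: leq_sum => i _; exact: hu.
    rewrite sum_nat_const card_ord; lia.
  have h2 : (size (\prod_(i < q) M (rshift p i) (s (rshift p i)))%R <= 1)%N.
    apply: (leq_trans (size_poly_prod_leq _ _)).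
    rewrite card_ord leq_subLR; apply: (@leq_trans (\sum_(i < q) 1).+1).
      by rewrite ltnS; apply: leq_sum => i _; exact: hd.
    rewrite sum_nat_const card_ord; lia.
  rewrite -subn1 leq_subLR; apply: leq_trans (leq_add h1 h2) _; by rewrite addnC.
by case: (odd_perm s); rewrite ?size_opp.
Qed.
End P5.
Section P6.
Variable R : realType.
Local Notation K := R[i].

Definition Pm d n (B : 'M[K]_(d,n)) (N : 'M[K]_n) : {poly K} :=
  \det (block_mx (1%:M : 'M[{poly K}]_d) (map_mx (fun x => 'X * x%:P) B)
          (map_mx polyC (adjmx B)) (map_mx polyC N)).

Lemma Pm_size d n (B : 'M[K]_(d,n)) N : (size (Pm B N) <= d.+1)%N.
Proof.
apply: size_det_block => i j; case: (split_ordP j) => j' ->.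
- rewrite block_mxEul mxE; case: (_ == _) => /=; rewrite ?size_polyC ?size_poly0 ?oner_eq0 //.
  by case: (_ != _).
- rewrite block_mxEur mxE; apply: (leq_trans (size_mul_leq _ _)).
  by rewrite size_polyX; have := size_polyC_leq1 (B i j'); case: (size _) => [|[]].
- by rewrite block_mxEdl mxE size_polyC_leq1.
- by rewrite block_mxEdr mxE size_polyC_leq1.
Qed.

Lemma Pm_horner d n (B : 'M[K]_(d,n)) N r :
  (Pm B N).[r] = \det (N - r *: (adjmx B *m B)).
Proof.
rewrite /Pm -horner_evalE -det_map_mx map_block_mx.
have := L0 1 r 1 B (adjmx B) N; rewrite !expr1n !mul1r mulr1 !scale1r => <-.
congr (\det (block_mx _ _ _ _)); apply/matrixP => i j; rewrite !mxE ?horner_evalE ?hornerE //.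
all: rewrite ?rmorph_nat //= !horner_evalE ?hornerE //.
Qed.

Lemma Kf_Pm n d (X : 'M[K]_n) (B : 'M[K]_(d,n)) e t r :
  adjmx B *m B = defect X -> Kf X e t 1 r = (Pm B (t%:M - Hm X e)).[r].
Proof. by move=> hB; rewrite Pm_horner /Kf scale1r hB. Qed.

Lemma Kf_hom n (X : 'M[K]_n) e t a b : a != 0 ->
  Kf X e t a b = a ^+ n * Kf X e t 1 (b / a).
Proof.
move=> ha; by rewrite /Kf -detZ [in RHS]scalerBr !scalerA mulr1 mulrCA divff // mulr1.
Qed.
End P6.
Section P7.
Variable R : realType.
Local Notation K := R[i].

Lemma poly_eq0_all (p : {poly K}) : (forall t, p.[t] = 0) -> p = 0.
Proof.
move=> h; apply: (@roots_geq_poly_eq0 _ p [seq i%:R | i <- iota 0 (size p)]).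
- by apply/allP => x /mapP [i _ ->]; rewrite /root h.
- by rewrite map_inj_uniq ?iota_uniq // => i j /eqP; rewrite eqr_nat => /eqP.
- by rewrite size_map size_iota.
Qed.

Fixpoint AB (j : nat) : {poly K} * {poly K} :=
  if j is j'.+1 then ((AB j').1 * 'X - (AB j').2, (AB j').1 * (4%:R^-1)%:P)
  else (1, 0).

Lemma AB_horner t j : iter j (phi t) (1, 0) = ((AB j).1.[t], (AB j).2.[t]).
Proof.
elim: j => [|j IH] /=; first by rewrite !hornerE.
by rewrite IH /phi /= !hornerE.
Qed.

Lemma AB_size j : [/\ (AB j).1 \is monic, size (AB j).1 = j.+1 & (size (AB j).2 <= j)%N].
Proof.
elim: j => [|j [hm hs hb]] /=; first by rewrite monic1 size_poly1 size_poly0.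
have hA : (AB j).1 != 0 by exact: monic_neq0.
have sX : size ((AB j).1 * 'X) = j.+2 by rewrite size_mulX // hs.
have lt : (size (- (AB j).2)%R < size ((AB j).1 * 'X)%R)%N by rewrite size_opp sX ltnS (leq_trans hb).
split.
- by rewrite monicE lead_coefDl // lead_coefMX -monicE.
- by rewrite size_polyDl.
- apply: (leq_trans (size_mul_leq _ _)); rewrite hs.
  by rewrite size_polyC; case: (_ != _); rewrite ?addn1 ?addn0.
Qed.

Definition Cp i j := (AB i).2 * (AB j).1 - (AB j).2 * (AB i).1.

Lemma Cp_S i j : Cp i.+1 j.+1 = (4%:R^-1)%:P * Cp i j.
Proof. rewrite /Cp /=; ring. Qed.

Lemma Cp_neq0 i s : Cp i (i + s.+1) != 0.
Proof.
elim: i => [|i IH].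
  rewrite /Cp /= mul0r mulr1 sub0r oppr_eq0 mulf_neq0 //.
    by case: (AB_size s) => /monic_neq0.
  by rewrite polyC_eq0 invr_eq0 pnatr_eq0.
by rewrite addSn Cp_S mulf_neq0 // polyC_eq0 invr_eq0 pnatr_eq0.
Qed.
End P7.
Section P8.
Variable R : realType.
Local Notation K := R[i].

Lemma cp_Kf m (Y : 'M[K]_m) e t : (char_poly (Hm Y e)).[t] = Kf Y e t 1 0.
Proof.
rewrite /Kf scale1r scale0r subr0 /char_poly -horner_evalE -det_map_mx.
congr (\det _); apply/matrixP => i j; rewrite !mxE rmorphB rmorphMn /= !horner_evalE.
by rewrite hornerX hornerC.
Qed.

Lemma window n (X : 'M[K]_n) d (B0 : 'M[K]_(d,n)) (T : nat -> sqmx R) :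
  adjmx B0 *m B0 = defect X -> T 0%N = SqMx X -> (forall j, A_step (T j) (T j.+1)) ->
  forall e1 e2, e1 * conjc e1 = 1 -> e2 * conjc e2 = 1 -> forall w0,
  (forall j, (w0 <= j <= w0 + d)%N ->
     char_poly (Hm (smat (T j)) e1) = char_poly (Hm (smat (T j)) e2)) ->
  forall k, char_poly (Hm (smat (T k)) e1) = char_poly (Hm (smat (T k)) e2).
Proof.
move=> hB h0 hT e1 e2 he1 he2 w0 hw k.
set N := maxn k (w0 + d).
set Q := (\prod_(j < N.+1) (AB R j).1) *
         \prod_(i < N.+1) \prod_(j < N.+1 | (i < j)%N) Cp R i j.
have hQ : Q != 0.
  rewrite mulf_neq0 //; apply/prodf_neq0 => i _.
    by case: (AB_size R i) => /monic_neq0.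
  apply/prodf_neq0 => j hij.
  have -> : (j : nat) = (i + (j - i.+1).+1)%N by lia.
  exact: Cp_neq0.
apply/eqP; rewrite -subr_eq0; apply/eqP.
apply: (mulIf hQ); rewrite mul0r; apply: poly_eq0_all => t.
rewrite hornerM; have [->|hQt] := eqVneq Q.[t] 0; first by rewrite mulr0.
apply/eqP; rewrite mulf_eq0 (negbTE hQt) orbF; apply/eqP.
move: hQt; rewrite /Q hornerM mulf_eq0 negb_or => /andP [hQ1 hQ2].
set a := fun j => (AB R j).1.[t]; set b := fun j => (AB R j).2.[t].
have ha : forall j, (j <= N)%N -> a j != 0.
  move=> j hj; move: hQ1; rewrite horner_prod => /prodf_neq0.
  by move=> /(_ (Ordinal (hj : (j < N.+1)%N)) isT).
have hc : forall i j, (i < j <= N)%N -> b i * a j - b j * a i != 0.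
  move=> i j /andP [hij hj]; move: hQ2; rewrite horner_prod => /prodf_neq0.
  have hi : (i < N.+1)%N by lia.
  move=> /(_ (Ordinal hi) isT); rewrite horner_prod => /prodf_neq0.
  move=> /(_ (Ordinal (hj : (j < N.+1)%N)) hij).
  by rewrite /Cp hornerD hornerN !hornerM.
have hK : forall j, (j <= N)%N -> exists c : K, c != 0 /\ forall e, e * conjc e = 1 ->
    (char_poly (Hm (smat (T j)) e)).[t] = c * (Pm B0 (t%:M - Hm X e)).[b j / a j].
  move=> j hj.
  have [F [G [hF [hG hE]]]] := Kf_tower hT (t := t) (ps := (1, 0)) (k := j)
     (fun i hi => etrans (congr1 (fun x => x.1 != 0) (AB_horner t i))
                         (ha i (leq_trans hi hj))).
  exists (G / F * a j ^+ n); split.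
    by rewrite !mulf_neq0 ?invr_eq0 // expf_neq0 // ha.
  move=> e he; rewrite cp_Kf; have := hE e he; rewrite AB_horner h0 /= => hE'.
  apply: (mulfI hF); rewrite hE' -(Kf_Pm e t _ hB).
  rewrite (Kf_hom _ _ _ _ (ha j hj)) /a /b.
  by rewrite [G / F]mulrC -!mulrA mulVKf.
pose P := Pm B0 (t%:M - Hm X e1) - Pm B0 (t%:M - Hm X e2).
have hPr : forall j, (j <= N)%N -> exists c : K, c != 0 /\
    (char_poly (Hm (smat (T j)) e1)).[t] - (char_poly (Hm (smat (T j)) e2)).[t] =
    c * P.[b j / a j].
  move=> j hj; have [c [hc0 hE]] := hK j hj.
  exists c; split; first exact: hc0.
  have E1 := hE e1 he1; have E2 := hE e2 he2.
  apply: (etrans (congr2 (fun x y => x - y) E1 E2)).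
  rewrite -mulrBr; congr (_ * _); apply/esym.
  apply: etrans (hornerD _ _ _) _; congr (_ + _); exact: hornerN.
have hP : P = 0.
  apply: (@roots_geq_poly_eq0 _ P [seq b j / a j | j <- iota w0 d.+1]).
  - apply/allP => x /mapP [j hj ->]; move: hj; rewrite mem_iota => hj.
    have hjN : (j <= N)%N by lia.
    have [c [hc0 hE]] := hPr j hjN.
    have hwj : (w0 <= j <= w0 + d)%N by lia.
    apply/eqP; apply: (mulfI hc0); rewrite mulr0; apply: (etrans (esym hE)).
    apply/eqP; rewrite subr_eq0; apply/eqP; exact: (congr1 (fun p => p.[t]) (hw j hwj)).
  - rewrite map_inj_in_uniq ?iota_uniq // => i j; rewrite !mem_iota => hi hj hij.
    apply/eqP; apply: contraT => nij.
    wlog lij : i j hi hj hij nij / (i < j)%N.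
      move=> W; case: (ltngtP i j) => h; first exact: W h.
        by apply: (W j i) => //; rewrite eq_sym.
      by rewrite h eqxx in nij.
    have hi' : (i <= N)%N by lia.
    have hj' : (j <= N)%N by lia.
    have hij' : (i < j <= N)%N by rewrite lij hj'.
    have ei : b i = (b j / a j) * a i by rewrite -hij divfK // ha.
    have ej : b j = (b j / a j) * a j by rewrite divfK // ha.
    by move: (hc i j hij'); rewrite ei {2}ej mulrAC subrr eqxx.
  - rewrite size_map size_iota; apply: (leq_trans (size_polyD _ _)).
    rewrite geq_max; apply/andP; split; first exact: Pm_size.
    rewrite size_opp; exact: Pm_size.
have hkN : (k <= N)%N by lia.
have [c [_ hE]] := hPr k hkN.
apply: etrans (hornerD _ _ _) _.
apply: etrans (congr1 (fun x => _ + x) (hornerN _ _)) _.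
by apply: etrans hE _; rewrite hP horner0 mulr0.
Qed.
End P8.
Section P9.
Variable R : realType.
Local Notation K := R[i].

Lemma expiN (th : R) : expi (- th) = conjc (expi th).
Proof. by rewrite /expi cosN sinN. Qed.

Lemma expi_unit (th : R) : expi th * conjc (expi th) = 1.
Proof.
rewrite /expi /=; apply/eqP; rewrite eq_complex /=; apply/andP; split; apply/eqP.
  by rewrite mulrN opprK -!expr2 cos2Dsin2.
by rewrite mulrN [sin th * _]mulrC addNr.
Qed.

Lemma Hmx_Hm m (Y : 'M[K]_m) th : Hmx Y th = Hm Y (expi th).
Proof. by rewrite /Hmx /Hm expiN. Qed.

Lemma expi_neq0 th : expi th != 0 :> K.
Proof.
apply/eqP => h; have := expi_unit th; rewrite h mul0r => /eqP.
by rewrite eq_sym oner_eq0.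
Qed.

Lemma many_expi N : exists rs : seq K, [/\ uniq rs, size rs = N &
  forall z, z \in rs -> exists th : R, z = expi th].
Proof.
exists [seq expi (acos ((k.+1)%:R^-1 : R)) | k <- iota 0 N]; split.
- rewrite map_inj_in_uniq ?iota_uniq // => i j _ _ /eqP.
  rewrite /expi eq_complex /= => /andP [/eqP h _].
  have hx : forall k : nat, ((k.+1)%:R^-1 : R) \in `[(-1), 1].
    move=> k; rewrite in_itv /=; apply/andP; split.
      by apply: (le_trans (lerN10 _)); rewrite invr_ge0 ler0n.
    by rewrite invf_le1 ?ltr0Sn // ler1n.
  move: h; rewrite !acosK ?hx // => /invr_inj /eqP; rewrite eqr_nat => /eqP [].
  done.
- by rewrite size_map size_iota.
- by move=> z /mapP [k _ ->]; eexists.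
Qed.
End P9.
Section P10.
Variable R : realType.
Local Notation K := R[i].

Definition Zv : {poly {poly K}} := ('X : {poly K})%:P.
Definition Mbi m (Y : 'M[K]_m) : 'M[{poly {poly K}}]_m :=
  (Zv * 'X)%:M - map_mx (fun x => (x / 2%:R)%:P%:P) Y
  - map_mx (fun x => ((('X : {poly K}) ^+ 2 * (x / 2%:R)%:P) : {poly K})%:P) (adjmx Y).
Definition Psi m (Y : 'M[K]_m) := \det (Mbi Y).

Lemma Psi_eval m (Y : 'M[K]_m) e : e * conjc e = 1 ->
  map_poly (horner_eval e) (Psi Y) = (e ^+ m)%:P * char_poly (Hm Y e).
Proof.
move=> he; rewrite /Psi -det_map_mx.
have -> : map_mx (map_poly (horner_eval e)) (Mbi Y) = e%:P *: char_poly_mx (Hm Y e).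
  apply/matrixP => i j; rewrite !mxE.
  rewrite !rmorphB /= !rmorphMn /= !rmorphM /= !map_polyC !map_polyX /= !horner_evalE.
  rewrite !hornerX !hornerC mulrBr -mulrnAr -!polyCM -addrA -opprD -polyCD.
  congr (_ - _%:P).
  rewrite [RHS](_ : _ = 2%:R^-1 * ((e * conjc e) * Y i j + e * e * conjc (Y j i))); last by ring.
  by rewrite he; ring.
by rewrite detZ rmorphXn.
Qed.
End P10.
Section P11.
Variable R : realType.
Local Notation K := R[i].

Lemma finite_const m (Y : 'M[K]_m) (F : seq {poly K}) :
  (forall th : R, char_poly (Hm Y (expi th)) \in F) ->
  exists p, forall th : R, char_poly (Hm Y (expi th)) = p.
Proof.
move=> hF.
pose lift (p : {poly K}) : {poly {poly K}} := map_poly polyC p.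
pose D p := Psi Y - (Zv R) ^+ m * lift p.
have hev : forall th p, map_poly (horner_eval (expi th)) (D p) =
    ((expi th) ^+ m)%:P * (char_poly (Hm Y (expi th)) - p).
  move=> th p; rewrite /D rmorphB rmorphM rmorphXn /= Psi_eval ?expi_unit //.
  have -> : map_poly (horner_eval (expi th)) (Zv R) = (expi th)%:P.
    by rewrite /Zv map_polyC /= horner_evalE hornerX.
  have -> : map_poly (horner_eval (expi th)) (lift p) = p.
    by apply/polyP => i; rewrite /lift !coef_map /= horner_evalE hornerC.
  by rewrite mulrBr rmorphXn.
case: (boolP (all (fun p => D p != 0) F)) => [hall | ].
  exfalso.
  pose g := \prod_(p <- F) lead_coef (D p).
  have hg : g != 0.
    rewrite prodf_seq_neq0; apply/allP => p hp /=.
    by rewrite lead_coef_eq0; exact: (allP hall p hp).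
  have hroot : forall th, root g (expi th).
    move=> th; have hp := hF th; rewrite /root /g horner_prod (big_rem _ hp) /=.
    have -> : (lead_coef (D (char_poly (Hm Y (expi th))))).[expi th] = 0.
      rewrite lead_coefE -horner_evalE -coef_map hev subrr mulr0 coef0 //.
    by rewrite mul0r.
  have [rs [hu hs hin]] := many_expi R (size g).
  have := @roots_geq_poly_eq0 _ g rs.
  have hr : all (root g) rs by apply/allP => z /hin [th ->]; exact: hroot.
  by move=> /(_ hr hu); rewrite hs leqnn => /(_ isT) /eqP; rewrite (negbTE hg).
rewrite -has_predC => /hasP [p hp]; rewrite /= negbK => /eqP hD.
exists p => th; have := hev th p; rewrite hD rmorph0 => /esym/eqP.
rewrite mulf_eq0 polyC_eq0 expf_eq0 (negbTE (expi_neq0 th)) andbF /= subr_eq0.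
by move=> /eqP.
Qed.
End P11.
Section P12.
Variable R : realType.
Local Notation K := R[i].

Fixpoint allseqs (s : seq K) m : seq (seq K) :=
  if m is m'.+1 then [seq x :: y | x <- s, y <- allseqs s m'] else [:: [::]].

Lemma mem_allseqs s r : all (fun z => z \in s) r -> r \in allseqs s (size r).
Proof.
elim: r => [|x r IH] /=; first by rewrite inE.
by case/andP => hx hr; apply: (allpairs_f (fun a b => a :: b)) => //; exact: IH.
Qed.

Lemma spec_cp m (A B : 'M[K]_m) : char_poly A = char_poly B -> spectrum A = spectrum B.
Proof.
move=> h; apply: FunctionalExtensionality.functional_extensionality => z.
by rewrite /spectrum !eigenvalue_root_char h.
Qed.

Lemma spec_root m (A B : 'M[K]_m) z : spectrum A = spectrum B ->
  root (char_poly A) z -> root (char_poly B) z.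
Proof.
move=> h; rewrite -!eigenvalue_root_char => hA.
have : spectrum B z by rewrite -h.
done.
Qed.

Lemma circ_cp m (Y : 'M[K]_m) : circularity Y <->
  (forall th1 th2 : R, char_poly (Hm Y (expi th1)) = char_poly (Hm Y (expi th2))).
Proof.
split; last first.
  move=> h th1 th2; rewrite !Hmx_Hm; exact: spec_cp.
move=> hc.
pose p0 := char_poly (Hm Y (expi 0)).
have [r0 hr0] := closed_field_poly_normal p0.
have hp0 : lead_coef p0 != 0 by rewrite lead_coef_eq0 monic_neq0 // char_poly_monic.
have hroot0 : forall z, root p0 z -> z \in r0.
  by move=> z; rewrite {1}hr0 rootZ // root_prod_XsubC.
pose F := [seq \prod_(z <- s) ('X - z%:P) | s <- allseqs r0 m].
have hF : forall th : R, char_poly (Hm Y (expi th)) \in F.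
  move=> th.
  have [r hr] := closed_field_poly_normal (char_poly (Hm Y (expi th))).
  move: hr; rewrite (monicP (char_poly_monic _)) scale1r => hr.
  have hs : size r = m.
    by have := congr1 (fun q : {poly K} => size q) hr; rewrite size_char_poly size_prod_XsubC => -[].
  have E : spectrum (Hm Y (expi th)) = spectrum (Hm Y (expi 0)).
    by have := hc th 0; rewrite !Hmx_Hm.
  have hall : all (fun z => z \in r0) r.
    apply/allP => z hz; apply: hroot0; apply: (spec_root E).
    by rewrite hr root_prod_XsubC.
  rewrite hr; apply: map_f; rewrite -hs; exact: mem_allseqs.
have [p hp] := finite_const hF.
by move=> th1 th2; exact: etrans (hp th1) (esym (hp th2)).
Qed.
End P12.
Local Close Scope complex_scope.
Theorem mainTheorem5 (R : realType) (n : nat) (X : 'M[R[i]]_n)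
    (T : nat -> sqmx R) :
  contraction X -> pi_tower X T ->
  let d := \rank (defect X) in
  ((forall j, circ (T j)) <-> (forall j, (1 <= j <= d.+1)%N -> circ (T j))) /\
  ((forall j, circ (T j)) <-> (forall j, (j <= d)%N -> circ (T j))).
Proof.
move=> _ [h0 hT] d.
have [d0 [B0 [hd0 hB0]]] : exists d0 (B0 : 'M[R[i]]_(d0, n)),
    d0 = d /\ adjmx B0 *m B0 = defect X.
  have := hT 0%N; rewrite /A_step h0 /= => -[d0 [B [[hd [_ hB]] _]]].
  by exists d0, B.
have key : forall w0, (forall j, (w0 <= j <= w0 + d0)%N -> circ (T j)) ->
    forall k, circ (T k).
  move=> w0 hw k; rewrite /circ circ_cp => th1 th2.
  apply: (window hB0 h0 hT (expi_unit th1) (expi_unit th2) (w0 := w0)) => j hj.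
  by have := hw j hj; rewrite /circ circ_cp => /(_ th1 th2).
split; split.
- by move=> h j _.
- move=> h; apply: (key 1%N) => j hj; apply: h; move: hj; rewrite hd0 /d; lia.
- by move=> h j _.
- move=> h; apply: (key 0%N) => j hj; apply: h; move: hj; rewrite hd0 /d; lia.
Qed.
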